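(* There exists a constant $C_A>0$ depending only on $A$, and for every $\varepsilon>0$ there exists a constant $c_{p_0,A,\varepsilon}>0$ depending only on $p_0,A,\varepsilon$, such that for every information structure $\mathbf q$, $$C_A\,\mathbb E\big[d(\mathbf q,\Delta^c_A(p_0))\big]\ \ge\ \mathrm{VoI}_A(\mathbf q)\ \ge\ c_{p_0,A,\varepsilon}\,\mathbb P\{\mathbf q\notin \Delta^c_{A,\varepsilon}(p_0)\}.$$
   Context: Let $K$ be a finite set of states of nature. Signed measures on $K$ are identified with $\mathbb R^K$, with scalar product $\langle s,v\rangle=\sum_{k\in K}s_kv_k$ and Euclidean norm $\|\cdot\|$. Let $\Delta\subset\mathbb R^K$ be the simplex of probability distributions on $K$, and fix a prior $p_0\in\Delta$ with full support. The action set $A\subset\mathbb R^K$ is the closed convex hull $\overline{\mathrm{co}}\{(g(d,k))_{k\in K}: d\in D\}$ for a compact set $D$ and a continuous $g:D\times K\to\mathbb R$; in particular $A$ is a nonempty compact convex subset of $\mathbb R^K$. The value function is $v_A(p)=\max_{a\in A}\langle p,a\rangle$ for $p\in\Delta$. For $p\in\Delta$, $A^\star(p)=\{a\in A:\langle p,a'\rangle\le\langle p,a\rangle\ \forall a'\in A\}$. For $a\in A$, $\Delta^\star_A(a)=\{p\in\Delta:\langle p,a'\rangle\le\langle p,a\rangle\ \forall a'\in A\}$. The confidence set is $\Delta^c_A(p_0)=\bigcap_{a\in A^\star(p_0)}\Delta^\star_A(a)$. For $q\in\Delta$, $d(q,\Delta^c_A(p_0))=\inf_{p\in\Delta^c_A(p_0)}\|p-q\|$,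 and for $\varepsilon>0$, $\Delta^c_{A,\varepsilon}(p_0)=\{q\in\Delta: d(q,\Delta^c_A(p_0))<\varepsilon\}$. An information structure is a random variable $\mathbf q$ on a probability space $(\Omega,\mathcal F,\mathbb P)$ with values in $\Delta$ and $\mathbb E[\mathbf q]=p_0$. The value of information is $\mathrm{VoI}_A(\mathbf q)=\mathbb E[v_A(\mathbf q)]-v_A(p_0)$. *)

(* Defs.v *)
From HB Require Import structures.
From mathcomp Require Import all_boot all_order all_algebra.
From mathcomp Require Import all_classical all_reals all_analysis.
Set Implicit Arguments. Unset Strict Implicit. Unset Printing Implicit Defensive.
Import Order.TTheory GRing.Theory Num.Theory.
Local Open Scope classical_set_scope.
Local Open Scope ring_scope.

Section Defs.
Context {R : realType} {K : finType}.

Definition dotp (s v : K -> R) : R := \sum_(k : K) s k * v k.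

Definition enorm (v : K -> R) : R := Num.sqrt (\sum_(k : K) v k ^+ 2).

Definition simplex : set (K -> R) :=
  [set p | (forall k, 0 <= p k) /\ \sum_(k : K) p k = 1].

Definition conv_hull (S : set (K -> R)) : set (K -> R) :=
  [set a | exists (n : nat) (w : 'I_n -> R) (x : 'I_n -> K -> R),
      (forall i, 0 <= w i) /\ \sum_(i < n) w i = 1 /\ (forall i, S (x i)) /\
      (forall k, a k = \sum_(i < n) w i * x i k)].

Definition eclosure (S : set (K -> R)) : set (K -> R) :=
  [set a | forall e : R, 0 < e -> exists2 s, S s & enorm (fun k => a k - s k) < e].

Definition action_set {T : Type} (D : set T) (g : T -> K -> R) : set (K -> R) :=
  eclosure (conv_hull [set (fun k => g x k) | x in D]).

(* v_A(p) = max_{a in A} <p,a> (the sup, which is attained for compact nonempty A) *)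
Definition valA (A : set (K -> R)) (p : K -> R) : R := sup [set dotp p a | a in A].

Definition Astar (A : set (K -> R)) (p : K -> R) : set (K -> R) :=
  [set a | A a /\ forall a', A a' -> dotp p a' <= dotp p a].

Definition Dstar (A : set (K -> R)) (a : K -> R) : set (K -> R) :=
  [set p | simplex p /\ forall a', A a' -> dotp p a' <= dotp p a].

Definition confset (A : set (K -> R)) (p0 : K -> R) : set (K -> R) :=
  [set p | simplex p /\ forall a, Astar A p0 a -> Dstar A a p].

Definition dist_to_set (q : K -> R) (S : set (K -> R)) : R :=
  inf [set enorm (fun k => p k - q k) | p in S].

Definition confset_eps (A : set (K -> R)) (p0 : K -> R) (eps : R) : set (K -> R) :=
  [set q | simplex q /\ dist_to_set q (confset A p0) < eps].

End Defs.

(* Main.v *)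
Require Import Defs.
From HB Require Import structures.
From mathcomp Require Import all_boot all_order all_algebra.
From mathcomp Require Import all_classical all_reals all_analysis.
From mathcomp Require Import ring lra.
From mathcomp Require Import measurable_realfun.
Import Order.TTheory GRing.Theory Num.Theory.
Import numFieldNormedType.Exports.
Local Open Scope classical_set_scope.
Local Open Scope ring_scope.

Set Implicit Arguments. Unset Strict Implicit. Unset Printing Implicit Defensive.

Section Alg.
Variables (R : realType) (K : finType).
Implicit Types (u v p q a : K -> R).

Definition l1 (u v : K -> R) : R := \sum_k `|u k - v k|.

Lemma l1_ge0 u v : 0 <= l1 u v.
Proof. by apply: sumr_ge0 => k _. Qed.

Lemma l1C u v : l1 u v = l1 v u.
Proof. by apply: eq_bigr => k _; rewrite distrC. Qed.

Lemma enorm_ge0 v : 0 <= enorm v. Proof. exact: sqrtr_ge0. Qed.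

Lemma sumsq_ge0 v : 0 <= \sum_k v k ^+ 2.
Proof. by apply: sumr_ge0 => k _; exact: sqr_ge0. Qed.

Lemma coord_le_enorm v k : `|v k| <= enorm v.
Proof.
rewrite /enorm -sqrtr_sqr ler_sqrt ?sumsq_ge0 //.
rewrite (bigD1 k) //= lerDl; apply: sumr_ge0 => i _; exact: sqr_ge0.
Qed.

Lemma sumabs_le_enorm v : \sum_k `|v k| <= #|K|%:R * enorm v.
Proof.
apply: le_trans (ler_sum _ (fun k _ => coord_le_enorm v k)) _.
by rewrite sumr_const mulr_natl.
Qed.

Lemma coord_le_sumabs v k : `|v k| <= \sum_i `|v i|.
Proof. by rewrite (bigD1 k) //= lerDl; apply: sumr_ge0. Qed.

Lemma enorm_le_sumabs v : enorm v <= \sum_k `|v k|.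
Proof.
have S0 : 0 <= \sum_k `|v k| by apply: sumr_ge0.
rewrite /enorm -[X in _ <= X]ger0_norm // -sqrtr_sqr ler_sqrt ?sqr_ge0 //.
rewrite expr2 mulr_suml; apply: ler_sum => k _.
rewrite -[v k ^+ 2]real_normK ?num_real // expr2.
by apply: ler_wpM2l => //; exact: coord_le_sumabs.
Qed.

Lemma cauchy_schwarz u v :
  (\sum_k u k * v k) ^+ 2 <= (\sum_k u k ^+ 2) * (\sum_k v k ^+ 2).
Proof.
set A := \sum_k u k ^+ 2; set B := \sum_k v k ^+ 2; set C := \sum_k u k * v k.
have [B0|Bn0] := eqVneq B 0.
  have v0 : forall k, v k = 0.
    move=> k; move/eqP: B0; rewrite psumr_eq0 => [/allP H|i _]; last exact: sqr_ge0.
    by have := H k (mem_index_enum k); rewrite implyTb sqrf_eq0 => /eqP.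
  have -> : C = 0 by rewrite /C big1 // => k _; rewrite v0 mulr0.
  by rewrite B0 expr0n /= mulr0.
have Bgt0 : 0 < B by rewrite lt_def Bn0 sumsq_ge0.
have H : 0 <= \sum_k (B * u k - C * v k) ^+ 2 by apply: sumsq_ge0.
have E : \sum_k (B * u k - C * v k) ^+ 2 = B * (A * B - C ^+ 2).
  rewrite (eq_bigr (fun k => B ^+ 2 * u k ^+ 2 - (2 * B * C) * (u k * v k)
     + C ^+ 2 * v k ^+ 2)); last by move=> k _; ring.
  rewrite big_split /= sumrB -!mulr_sumr -/A -/B -/C; ring.
move: H; rewrite E pmulr_rge0 // subr_ge0 => H.
exact: H.
Qed.

Lemma enormD u v : enorm (fun k => u k + v k) <= enorm u + enorm v.
Proof.
rewrite /enorm.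
set A := \sum_k u k ^+ 2; set B := \sum_k v k ^+ 2; set C := \sum_k u k * v k.
have A0 : 0 <= A := sumsq_ge0 u. have B0 : 0 <= B := sumsq_ge0 v.
rewrite -[X in _ <= X]ger0_norm ?addr_ge0 ?sqrtr_ge0 // -sqrtr_sqr ler_sqrt ?sqr_ge0 //.
have -> : \sum_k (u k + v k) ^+ 2 = A + 2 * C + B.
  rewrite (eq_bigr (fun k => u k ^+ 2 + 2 * (u k * v k) + v k ^+ 2)); last by move=> k _; ring.
  by rewrite !big_split /= -mulr_sumr.
rewrite sqrrD !sqr_sqrtr //.
have HC : C <= Num.sqrt A * Num.sqrt B.
  apply: le_trans (ler_norm C) _.
  rewrite -sqrtr_sqr -sqrtrM // ler_sqrt ?mulr_ge0 //; exact: cauchy_schwarz.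
lra.
Qed.

Lemma enorm_ext u v : u =1 v -> enorm u = enorm v.
Proof. by move=> /funext ->. Qed.

Lemma enorm_tri p q q' :
  enorm (fun k => p k - q' k) <= enorm (fun k => p k - q k) + l1 q q'.
Proof.
rewrite (@enorm_ext _ (fun k => (p k - q k) + (q k - q' k))); last by move=> k; ring.
apply: le_trans (enormD _ _) _; rewrite lerD2l; exact: enorm_le_sumabs.
Qed.

Lemma enorm_self p : enorm (fun k => p k - p k) = 0.
Proof. by rewrite /enorm big1 ?sqrtr0 // => k _; rewrite subrr expr2 mulr0. Qed.

Lemma dist_has_lb q S : has_lbound [set enorm (fun k => p k - q k) | p in S].
Proof. by exists 0 => _ [p _ <-]; exact: enorm_ge0. Qed.

Lemma dist_ge0 q S : S !=set0 -> 0 <= dist_to_set q S.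
Proof.
move=> [p Sp]; apply: lb_le_inf; first by exists (enorm (fun k => p k - q k)), p.
by move=> _ [p' _ <-]; exact: enorm_ge0.
Qed.

Lemma dist_le q {S p} : S p -> dist_to_set q S <= enorm (fun k => p k - q k).
Proof. by move=> Sp; apply: (ge_inf (dist_has_lb q S)); exists p. Qed.

Lemma dist_lip q q' S : S !=set0 -> dist_to_set q' S <= dist_to_set q S + l1 q q'.
Proof.
move=> [p0 Sp0]; rewrite -lerBlDr; apply: lb_le_inf.
  by exists (enorm (fun k => p0 k - q k)), p0.
move=> _ [p Sp <-]; rewrite lerBlDr.
apply: (le_trans (dist_le q' Sp)); exact: enorm_tri.
Qed.

Lemma dist_in p S : S p -> dist_to_set p S <= 0.
Proof. by move=> Sp; rewrite -(enorm_self p); exact: dist_le. Qed.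

End Alg.

HB.instance Definition _ (R : realType) (K : finType) :=
  Pointed.copy (prod_topology (fun _ : K => (R : ptopologicalType)))
               (K -> (R : ptopologicalType)).

Section Lip.
Variables (R : realType) (K : finType).
Notation PT := (prod_topology (fun _ : K => (R : ptopologicalType))).

Definition lipF (F : (K -> R) -> R) (C : R) :=
  forall x y : K -> R, `|F x - F y| <= C * l1 x y.

Lemma near_coords (x : PT) (e : R) : 0 < e ->
  \forall y \near x, forall k, `|(x k : R) - y k| < e.
Proof.
move=> e0.
have H k : \forall y \near x, `|(x k : R) - (y : PT) k| < e.
  have := @proj_continuous K (fun _ => (R : ptopologicalType)) k x.
  by move=> /cvgrPdist_lt/(_ e e0).
exact: (@filter_forall _ K (fun k (y : PT) => `|(x k : R) - y k| < e) _ _ H).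
Qed.

Lemma l1_small (x y : K -> R) (e : R) : (forall k, `|x k - y k| < e) ->
  l1 x y <= #|K|%:R * e.
Proof.
move=> H; apply: le_trans (ler_sum _ (fun k _ => ltW (H k))) _.
by rewrite sumr_const mulr_natl.
Qed.

Lemma lip_continuous (F : PT -> R) C : lipF F C -> continuous F.
Proof.
move=> HF x; apply/cvgrPdist_lt => e e0.
set c := `|C| * #|K|%:R.
have c0 : 0 <= c by rewrite mulr_ge0.
set eta := e / (c + 1).
have eta0 : 0 < eta by rewrite divr_gt0 // ltr_wpDl.
apply: filterS (near_coords x eta0) => y Hy.
apply: le_lt_trans (HF x y) _.
apply: le_lt_trans (_ : C * l1 x y <= c * eta) _.
  rewrite /c -mulrA; apply: le_trans (ler_wpM2r (l1_ge0 _ _) (ler_norm C)) _.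
  by apply: ler_wpM2l => //; exact: l1_small.
rewrite /eta mulrA ltr_pdivrMr ?ltr_wpDl //; nra.
Qed.

Lemma lip_closed_ge (F : PT -> R) C r : lipF F C -> closed [set x : PT | r <= F x].
Proof.
move=> HF; apply: (@preimage_closed _ _ F [set y | r <= y]); last exact: closed_ge.
by move=> x _; exact: lip_continuous HF x.
Qed.

Lemma lip_closed_eq (F : PT -> R) C r : lipF F C -> closed [set x : PT | F x = r].
Proof.
move=> HF; apply: (@preimage_closed _ _ F [set y | y = r]); last exact: closed_eq.
by move=> x _; exact: lip_continuous HF x.
Qed.

Lemma lip_open_gt (F : PT -> R) C r : lipF F C -> open [set x : PT | r < F x].
Proof.
move=> HF; apply: (@open_comp _ _ F [set y | r < y]); last exact: open_gt.
by move=> x _; exact: lip_continuous HF x.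
Qed.

End Lip.

Section Meas.
Variables (R : realType) (K : finType).

Lemma meas_forall d (Om : measurableType d) (P : K -> set Om) :
  (forall k, measurable (P k)) -> measurable [set w | forall k, P k w].
Proof.
move=> mP.
have Hs (s : seq K) : measurable [set w | forall k, k \in s -> P k w].
  elim: s => [|k s IH].
    by rewrite (_ : [set w | _] = setT) //; apply/seteqP; split => w //=.
  rewrite (_ : [set w | _] = P k `&` [set w | forall k, k \in s -> P k w]).
    exact: measurableI.
  apply/seteqP; split => w /=.
    by move=> H; split; [apply: H; rewrite inE eqxx|move=> i si; apply: H; rewrite inE si orbT].
  by move=> [Pk H] i; rewrite inE => /orP[/eqP ->//|/H].
rewrite (_ : [set w | _] = [set w | forall k, k \in enum K -> P k w]) //.
by apply/seteqP; split => w /= H k; [move=> _|]; apply: H; rewrite ?mem_enum.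
Qed.

Lemma lip_measurable d (Om : measurableType d) (q : Om -> K -> R)
    (F : (K -> R) -> R) C :
  0 <= C -> lipF F C -> (forall k, measurable_fun setT (fun w => q w k)) ->
  measurable_fun setT (fun w => F (q w)).
Proof.
move=> C0 HF mq mT.
apply: (measurability _ (RGenOInfty.measurableE R)) => //.
move=> _ [_ [a ->] <-]; rewrite preimage_itvoy.
set c := C * #|K|%:R.
have c0 : 0 <= c by rewrite mulr_ge0.
pose E (n : nat) : set Om :=
  if @unpickle ({ffun K -> rat} * rat)%type n is Some (r, dl) then
    if (0 < ratr dl :> R) && (a + c * ratr dl < F (fun k => ratr (r k)))
    then [set w | forall k, `|ratr (r k) - q w k| < ratr dl :> R]
    else set0
  else set0.
rewrite (_ : _ `&` _ = \bigcup_n E n).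
  apply: bigcupT_measurable => n; rewrite /E.
  case: unpickle => [[r dl]|]; last exact: measurable0.
  case: ifP => _; last exact: measurable0.
  apply: meas_forall => k.
  have := mq k measurableT _ (measurable_ball (ratr (r k) : R) (ratr dl)).
  by rewrite setTI.
apply/seteqP; split => w.
  move=> [_ /= Fq].
  set gg := F (q w) - a.
  have gg0 : 0 < gg by rewrite subr_gt0.
  have : 0 < gg / (2 * c + 1) by rewrite divr_gt0 // ltr_wpDl // mulr_ge0.
  move=> /rat_in_itvoo[dl]; rewrite in_itv /= => /andP[dl0 dlg].
  have : forall k, exists r : rat, ratr r \in `](q w k - ratr dl), (q w k + ratr dl)[.
    by move=> k; apply: rat_in_itvoo; rewrite ltrD2l gtrN.
  move=> /choice[rf Hr].
  exists (pickle ([ffun k => rf k], dl)) => //.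
  rewrite /E pickleK.
  have Hk : forall k, `|ratr ([ffun k => rf k] k) - q w k| < ratr dl :> R.
    move=> k; rewrite ffunE; have := Hr k; rewrite in_itv /= => /andP[h1 h2].
    rewrite ltr_norml; apply/andP; split; lra.
  rewrite dl0 /=.
  have l1le := l1_small Hk.
  have := HF (fun k => ratr ([ffun k => rf k] k)) (q w).
  have Hc : C * l1 (fun k => ratr ([ffun k => rf k] k)) (q w) <= c * ratr dl.
    by rewrite /c -mulrA; apply: ler_wpM2l.
  have Hd : 2 * c * ratr dl < gg.
    have hp : 0 < 2 * c + 1 by lra.
    move: dlg; rewrite ltr_pdivlMr // => h; nra.
  move=> Hl; rewrite ifT //.
  set Fr := F _ in Hl Hc *.
  have := ler_norm (F (q w) - Fr); rewrite distrC in Hl; rewrite /gg in Hd; lra.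
move=> [n _]; rewrite /E; case: unpickle => [[r dl]|] //.
case: ifP => // /andP[dl0 Hlt] Hw; split => //=.
have l1le := l1_small Hw.
have := HF (fun k => ratr (r k)) (q w).
have Hc : C * l1 (fun k => ratr (r k)) (q w) <= c * ratr dl.
  by rewrite /c -mulrA; apply: ler_wpM2l.
move=> Hl; have := ler_norm (F (fun k => ratr (r k)) - F (q w)); lra.
Qed.

End Meas.

Section Aset.
Variables (R : realType) (K : finType) (T : topologicalType) (D : set T) (g : T -> K -> R).
Hypotheses (cD : compact D) (D0 : D !=set0)
  (gc : forall k, {within D, continuous (fun x => g x k)}).
Local Notation A := (action_set D g).

Lemma g_bounded : exists M, 0 < M /\ forall x k, D x -> `|g x k| <= M.
Proof.
have H k : exists M : R, forall x, D x -> `|g x k| <= M.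
  have := compact_bounded (continuous_compact (@gc k) cD).
  case=> M [_ HM]; exists (`|M| + 1) => x Dx.
  by apply: (HM (`|M| + 1)); [have := ler_norm M; lra|exists x].
have /choice [Mf HMf] := H.
have S0 : 0 <= \sum_k `|Mf k| by apply: sumr_ge0.
exists (1 + \sum_k `|Mf k|); split; first lra.
move=> x k Dx; apply: le_trans (HMf k x Dx) _; apply: le_trans (ler_norm _) _.
have := coord_le_sumabs Mf k; lra.
Qed.

Lemma A_bounded : exists M, 0 < M /\ forall a k, A a -> `|a k| <= M.
Proof.
have [M0 [M00 HM0]] := g_bounded.
exists (M0 + 1); split; first lra.
move=> a k Aa; have [s [n [w [x [w0 [w1 [xS sE]]]]]] Hs] := Aa 1 ltr01.
have Hsk : `|s k| <= M0.
  rewrite sE; apply: le_trans (ler_norm_sum _ _ _) _.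
  apply: le_trans (_ : \sum_i w i * M0 <= _).
    apply: ler_sum => i _; rewrite normrM ger0_norm //; apply: ler_wpM2l => //.
    by case: (xS i) => y Dy <-; exact: HM0.
  by rewrite -mulr_suml w1 mul1r.
have Hak : `|a k - s k| < 1 := le_lt_trans (coord_le_enorm (fun k => a k - s k) k) Hs.
have := ler_normD (s k) (a k - s k); rewrite addrC subrK; lra.
Qed.

Lemma argmax p : exists2 x0, D x0 & forall x, D x -> dotp p (g x) <= dotp p (g x0).
Proof.
have cf : {within D, continuous (fun x => dotp p (g x))}.
  rewrite /dotp; apply: continuous_big => [|k _].
    exact: add_continuous.
  move=> x; apply: (@cvgM _ _ _ _ (cst (p k)) (fun x => g x k)).
    exact: cvg_cst.
  exact: gc.
have [x0 Dx0 H] := compact_EVT_max D0 cD cf.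
exists x0; first by rewrite inE in Dx0.
by move=> x Dx; apply: H; rewrite inE.
Qed.

Lemma conv_le p m : (forall x, D x -> dotp p (g x) <= m) ->
  forall a, conv_hull [set (fun k => g x k) | x in D] a -> dotp p a <= m.
Proof.
move=> H a [n [w [x [w0 [w1 [xS aE]]]]]].
have -> : dotp p a = \sum_i w i * dotp p (x i).
  rewrite /dotp (eq_bigr (fun k => \sum_i p k * (w i * x i k))); last first.
    by move=> k _; rewrite aE mulr_sumr.
  rewrite exchange_big; apply: eq_bigr => i _; rewrite mulr_sumr.
  by apply: eq_bigr => k _; ring.
apply: le_trans (_ : \sum_i w i * m <= _).
  apply: ler_sum => i _; apply: ler_wpM2l => //.
  by case: (xS i) => y Dy <-; exact: H.
by rewrite -mulr_suml w1 mul1r.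
Qed.

Lemma closure_le p m :
  (forall s, conv_hull [set (fun k => g x k) | x in D] s -> dotp p s <= m) ->
  forall a, A a -> dotp p a <= m.
Proof.
move=> H a Aa; apply/ler_addgt0Pr => e e0.
set P := \sum_k `|p k| + 1.
have Pp0 : 0 <= \sum_k `|p k| by apply: sumr_ge0.
have P0 : 0 < P by rewrite /P; lra.
have [s Cs Hs] := Aa (e / P) (divr_gt0 e0 P0).
have Hd : dotp p a - dotp p s <= (\sum_k `|p k|) * enorm (fun k => a k - s k).
  rewrite /dotp -sumrB mulr_suml; apply: ler_sum => k _; rewrite -mulrBr.
  apply: le_trans (ler_norm _) _; rewrite normrM; apply: ler_wpM2l => //.
  exact: (coord_le_enorm (fun k => a k - s k) k).
have He : (\sum_k `|p k|) * enorm (fun k => a k - s k) <= e.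
  apply: le_trans (ler_wpM2l Pp0 (ltW Hs)) _.
  apply: le_trans (_ : P * (e / P) <= e); last by rewrite mulrC divfK // gt_eqF.
  by apply: ler_wpM2r; [rewrite divr_ge0 // ltW|rewrite /P; lra].
have := H s Cs; lra.
Qed.

Lemma in_A x : D x -> A (g x).
Proof.
move=> Dx e e0; exists (g x).
  exists 1%N, (fun _ => 1), (fun _ => g x); split; first by [].
  split; first by rewrite big_ord1.
  split; first by move=> i; exists x.
  by move=> k; rewrite big_ord1 mul1r.
by rewrite (enorm_self (g x)).
Qed.

Lemma vA_max p : exists2 a, A a &
  valA A p = dotp p a /\ forall a', A a' -> dotp p a' <= dotp p a.
Proof.
have [x0 Dx0 H] := argmax p.
have Hle : forall a', A a' -> dotp p a' <= dotp p (g x0).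
  exact: closure_le (conv_le H).
exists (g x0); first exact: in_A.
split => //; rewrite /valA; apply/eqP; rewrite eq_le; apply/andP; split.
  apply: ge_sup; first by exists (dotp p (g x0)), (g x0) => //; exact: in_A.
  by move=> _ [a Aa <-]; exact: Hle.
apply: ub_le_sup; last by exists (g x0) => //; exact: in_A.
by exists (dotp p (g x0)) => _ [a Aa <-]; exact: Hle.
Qed.

Lemma vA_ge p a : A a -> dotp p a <= valA A p.
Proof. by move=> Aa; have [b Ab [-> H]] := vA_max p; exact: H. Qed.

Lemma dotp_diff (M : R) (p q a : K -> R) : (forall k, `|a k| <= M) -> dotp p a - dotp q a <= M * l1 p q.
Proof.
move=> Ha; rewrite /dotp -sumrB /l1 mulr_sumr; apply: ler_sum => k _.
rewrite -mulrBl; apply: le_trans (ler_norm _) _; rewrite normrM mulrC.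
exact: ler_wpM2r.
Qed.

Lemma vA_lip : exists M, 0 < M /\ forall p q : K -> R, `|valA A p - valA A q| <= M * l1 p q.
Proof.
have [M [M0 HM]] := A_bounded.
exists M; split => // p q.
have H1 p' q' : valA A p' - valA A q' <= M * l1 p' q'.
  have [a Aa [-> _]] := vA_max p'.
  have := vA_ge q' Aa; have := dotp_diff p' q' (fun k => HM a k Aa); lra.
rewrite ler_norml; apply/andP; split; last exact: H1.
have := H1 q p; rewrite l1C; lra.
Qed.

End Aset.

Section Seqs.
Variables (R : realType) (I : eqType).
Lemma sum_const_seq (s : seq I) (c : R) : \sum_(i <- s) c = (size s)%:R * c.
Proof.
elim: s => [|i s IH]; first by rewrite big_nil mul0r.
by rewrite big_cons IH /= mulrS; ring.
Qed.

Lemma elem_le_sum (s : seq I) (F : I -> R) i0 :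
  (forall i, i \in s -> 0 <= F i) -> i0 \in s -> F i0 <= \sum_(i <- s) F i.
Proof.
elim: s => [//|i s IH] F0; rewrite inE big_cons => /orP[/eqP ->|h].
  rewrite lerDl big_seq; apply: sumr_ge0 => j js; apply: F0.
  by rewrite inE js orbT.
have F0' : forall j, j \in s -> 0 <= F j by move=> j js; apply: F0; rewrite inE js orbT.
apply: le_trans (IH F0' h) _; rewrite lerDr; apply: F0; by rewrite inE eqxx.
Qed.
End Seqs.

Section Main.
Variables (R : realType) (K : finType) (T : topologicalType) (D : set T) (g : T -> K -> R).
Hypotheses (cD : compact D) (D0 : D !=set0)
  (gc : forall k, {within D, continuous (fun x => g x k)}).
Local Notation A := (action_set D g).
Notation PT := (prod_topology (fun _ : K => (R : ptopologicalType))).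

Lemma astar_eq p0 a : Astar A p0 a -> dotp p0 a = valA A p0.
Proof.
move=> [Aa H]; have [b Ab [-> Hb]] := vA_max cD D0 gc p0.
by apply/eqP; rewrite eq_le Hb // H.
Qed.

Lemma astar_ex p0 : exists a, Astar A p0 a.
Proof. by have [b Ab [_ Hb]] := vA_max cD D0 gc p0; exists b. Qed.

Lemma confset_val p0 a p : Astar A p0 a -> confset A p0 p -> valA A p = dotp p a.
Proof.
move=> Ha [_ Hc]; have [_ H] := Hc a Ha; have [Aa _] := Ha.
have [b Ab [-> Hb]] := vA_max cD D0 gc p.
by apply/eqP; rewrite eq_le H // Hb.
Qed.


Lemma dotp_avg (I : Type) (s : seq I) (h : I -> K -> R) (x a : K -> R) (z : R) :
  dotp x (fun k => (a k + \sum_(i <- s) h i k) * z) =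
  (dotp x a + \sum_(i <- s) dotp x (h i)) * z.
Proof.
rewrite /dotp exchange_big -big_split mulr_suml; apply: eq_bigr => k _ /=.
by rewrite -mulr_sumr; ring.
Qed.

Lemma conf_ne p0 : simplex p0 -> confset A p0 !=set0.
Proof. by move=> sp0; exists p0; split => // b [Ab Hb]; split. Qed.

Lemma upper_det : exists2 CA : R, 0 < CA & forall p0 a, simplex p0 -> Astar A p0 a ->
  forall q, valA A q - dotp q a <= CA * dist_to_set q (confset A p0).
Proof.
have [M [M0 HM]] := A_bounded cD gc.
have [L [L0 HL]] := vA_lip cD D0 gc.
have K0 : (0 : R) <= #|K|%:R by rewrite ler0n.
have CA0 : 0 < (L + M) * (#|K|%:R + 1) by apply: mulr_gt0; lra.
exists ((L + M) * (#|K|%:R + 1)) => // p0 a sp0 Ha q.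
rewrite mulrC -ler_pdivrMr //.
apply: lb_le_inf; first by have [p Cp] := conf_ne sp0; exists (enorm (fun k => p k - q k)), p.
move=> _ [p Cp <-]; rewrite ler_pdivrMr //.
have Hv := confset_val Ha Cp.
have [Aa _] := Ha.
have h1 := HL q p.
have h2 := dotp_diff p q (fun k => HM a k Aa).
have h3 := sumabs_le_enorm (fun k => p k - q k).
have e0 := enorm_ge0 (fun k => p k - q k).
rewrite l1C /l1 in h1; rewrite /l1 in h2.
have h4 := ler_norm (valA A q - valA A p).
set l := \sum_k _ in h1 h2 h3.
set e := enorm _ in h3 e0 *.
have X : valA A q - dotp q a <= (L + M) * l by lra.
apply: le_trans X _.
apply: le_trans (ler_wpM2l (ltW (addr_gt0 L0 M0)) h3) _.
have := mulr_ge0 (ltW (addr_gt0 L0 M0)) e0; nra.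
Qed.


Lemma lower_det p0 eps : simplex p0 -> 0 < eps ->
  exists b : K -> R, exists2 c : R, 0 < c &
   [/\ dotp p0 b = valA A p0, (forall q, dotp q b <= valA A q) &
       forall q, simplex q -> eps <= dist_to_set q (confset A p0) ->
         c <= valA A q - dotp q b].
Proof.
move=> sp0 eps0.
have [M [M0 HM]] := A_bounded cD gc.
have [L [L0 HL]] := vA_lip cD D0 gc.
have ne := conf_ne sp0.
set Cf := confset A p0.
pose S := [set q : PT | forall k, `[0, 1]%classic (q k)] `&`
  ([set q : PT | \sum_k q k = 1] `&` [set q : PT | eps <= dist_to_set q Cf]).
have cS : compact S.
  apply: compact_closedI.
    exact: (@tychonoff K (fun _ => (R : ptopologicalType)) (fun _ => `[0, 1]%classic)
                 (fun _ => @segment_compact R 0 1)).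
  apply: closedI.
    apply: (@lip_closed_eq R K (fun x : PT => \sum_k x k) 1).
    by move=> x y; rewrite mul1r /l1 -sumrB; exact: ler_norm_sum.
  apply: (@lip_closed_ge R K (fun x : PT => dist_to_set x Cf) 1).
  move=> x y /=; rewrite mul1r ler_norml.
  have := dist_lip x y ne; have := dist_lip y x ne; rewrite (l1C y x).
  by move=> h1 h2; apply/andP; split; lra.
have hlip a : Astar A p0 a -> lipF (fun x => valA A x - dotp x a) (L + M).
  move=> [Aa _] x y /=.
  have := HL x y; rewrite ler_norml => /andP[h1 h1'].
  have h2 := dotp_diff x y (fun k => HM a k Aa).
  have h3 := dotp_diff y x (fun k => HM a k Aa); rewrite (l1C y x) in h3.
  by rewrite ler_norml; apply/andP; split; lra.
pose Dc := [set i : (K -> R) * nat | Astar A p0 i.1].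
pose f := fun i : (K -> R) * nat => [set x : PT | i.2.+1%:R^-1 < valA A x - dotp x i.1].
have cov : S `<=` cover Dc f.
  move=> q [box [sum1 dq]]; rewrite /= in box sum1 dq.
  have sq : simplex q.
    split => // k; have := box k; rewrite /= in_itv /= => /andP[] //.
  have nq : ~ Cf q by move=> Cq; have := dist_in Cq; lra.
  have : ~ (forall a, Astar A p0 a -> Dstar A a q) by move=> H; apply: nq; split.
  move=> /existsNP [a /not_implyP [Ha nD]].
  have : ~ (forall a', A a' -> dotp q a' <= dotp q a) by move=> H; apply: nD; split.
  move=> /existsNP [a' /not_implyP [Aa' /negP]]; rewrite -ltNge => lt.
  set gap := valA A q - dotp q a.
  have gap0 : 0 < gap by have := vA_ge cD D0 gc q Aa'; rewrite /gap; lra.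
  exists (a, Num.truncn (gap^-1)) => //; rewrite /f /=.
  rewrite invf_plt ?posrE ?ltr0Sn //; exact: truncnS_gt.
have opens : forall i, Dc i -> open (f i).
  by move=> i Hi; apply: (@lip_open_gt R K (fun x : PT => valA A x - dotp x i.1) (L + M)); exact: hlip.
have := cS; rewrite compact_cover => /(_ _ _ _ opens cov) [D' subD covD].
have [a0 Ha0] := astar_ex p0.
have [Aa0 _] := Ha0.
set s := finmap.enum_fset D'.
have sDc : forall i, i \in s -> Astar A p0 i.1.
  by move=> i iS; have := subD i iS; rewrite inE.
pose m := size s.
pose Bm : R := m.+1%:R.
have Bm0 : 0 < Bm by rewrite ltr0Sn.
have BmE : Bm = m%:R + 1 by rewrite /Bm -natr1.
have Bm_ne : m%:R + 1 != 0 :> R by rewrite natr1 pnatr_eq0.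
pose N : R := \sum_(i <- s) (i.2.+1)%:R.
have N0 : 0 <= N by apply: sumr_ge0.
pose b := fun k => (a0 k + \sum_(i <- s) i.1 k) * Bm^-1.
have key x : valA A x - dotp x b =
    ((valA A x - dotp x a0) + \sum_(i <- s) (valA A x - dotp x i.1)) * Bm^-1.
  by rewrite /b dotp_avg sumrB sum_const_seq -/m BmE; field.
exists b; exists ((Bm * (N + 1))^-1).
  by rewrite invr_gt0 mulr_gt0 //; lra.
split.
- rewrite /b dotp_avg (astar_eq Ha0) (@eq_big_seq _ _ _ _ _ _ (fun _ => valA A p0)).
    by rewrite sum_const_seq -/m BmE; field.
  by move=> i iS; exact: astar_eq (sDc i iS).
- move=> q; rewrite /b dotp_avg.
  have H : dotp q a0 + \sum_(i <- s) dotp q i.1 <= valA A q + \sum_(i <- s) valA A q.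
    apply: lerD; first by have := @vA_ge _ _ _ _ _ cD D0 gc q a0 Aa0.
    by rewrite big_seq [X in _ <= X]big_seq; apply: ler_sum => i iS; have [Ai _] := sDc i iS;
      exact: (@vA_ge _ _ _ _ _ cD D0 gc q _ Ai).
  rewrite sum_const_seq -/m in H.
  have E : (valA A q + m%:R * valA A q) * Bm^-1 = valA A q by rewrite BmE; field.
  rewrite -[X in _ <= X]E; apply: ler_wpM2r H; by rewrite invr_ge0 ltW.
- move=> q sq dq.
  have Sq : S q.
    split.
      move=> k; rewrite /= in_itv /=; case: sq => q0 q1; apply/andP; split => //.
      rewrite -q1 (bigD1 k) //= lerDl; apply: sumr_ge0 => i _; exact: q0.
    split; first by case: sq.
    exact: dq.
  have [i0 Di0 fi0] := covD q Sq.
  have i0s : i0 \in s by exact: Di0.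
  rewrite key.
  have t00 : 0 <= valA A q - dotp q a0.
    by rewrite subr_ge0; exact: (@vA_ge _ _ _ _ _ cD D0 gc q _ Aa0).
  have F0 : forall i, i \in s -> 0 <= valA A q - dotp q i.1.
    move=> i iS; have [Ai _] := sDc i iS; rewrite subr_ge0.
    exact: (@vA_ge _ _ _ _ _ cD D0 gc q _ Ai).
  have T1 : valA A q - dotp q i0.1 <= \sum_(i <- s) (valA A q - dotp q i.1).
    exact: (@elem_le_sum _ _ s (fun i => valA A q - dotp q i.1) i0 F0 i0s).
  have fi : i0.2.+1%:R^-1 < valA A q - dotp q i0.1 by exact: fi0.
  have T2 : (N + 1)^-1 <= i0.2.+1%:R^-1.
    rewrite lef_pV2 ?posrE ?ltr0Sn //; last by lra.
    have := @elem_le_sum _ _ s (fun i => (i.2.+1)%:R) i0 (fun i _ => ler0n R i.2.+1) i0s.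
    rewrite /= -/N; lra.
  rewrite invfM mulrC; apply: ler_wpM2r; first by rewrite invr_ge0 ltW.
  apply: le_trans T2 _; apply: le_trans (ltW fi) _; apply: le_trans T1 _.
  by rewrite lerDr.
Qed.

End Main.

Section LipMore.
Variables (R : realType) (K : finType).

Lemma lipF_sub (F G : (K -> R) -> R) C1 C2 :
  lipF F C1 -> lipF G C2 -> lipF (fun x => F x - G x) (C1 + C2).
Proof.
move=> HF HG x y /=; have := HF x y; have := HG x y.
have := ler_normB (F x - F y) (G x - G y).
rewrite (_ : F x - F y - (G x - G y) = F x - G x - (F y - G y)); last by ring.
move=> h1 h2 h3; apply: le_trans h1 _; rewrite mulrDl; exact: lerD.
Qed.

Lemma dotp_lipF (b : K -> R) : lipF (fun x => dotp x b) (\sum_k `|b k|).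
Proof.
have Hb : forall k, `|b k| <= \sum_k `|b k| by move=> k; exact: coord_le_sumabs.
move=> x y /=; rewrite ler_norml; apply/andP; split.
  have := dotp_diff y x Hb; rewrite l1C; lra.
by have := dotp_diff x y Hb; lra.
Qed.

Lemma coord_lipF k : lipF (fun x : K -> R => x k) 1.
Proof. by move=> x y /=; rewrite mul1r; exact: (coord_le_sumabs (fun k => x k - y k) k). Qed.

Lemma dist_lipF (S : set (K -> R)) : S !=set0 -> lipF (fun x => dist_to_set x S) 1.
Proof.
move=> ne x y /=; rewrite mul1r ler_norml.
have := dist_lip x y ne; have := dist_lip y x ne; rewrite (l1C y x).
by move=> h1 h2; apply/andP; split; lra.
Qed.

Lemma l1_simplex (x : K -> R) : simplex x -> l1 x (fun _ => 0) = 1.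
Proof.
move=> [x0 x1]; rewrite /l1 -x1; apply: eq_bigr => k _.
by rewrite subr0 ger0_norm.
Qed.

End LipMore.

Section Integ.
Variables (R : realType) (K : finType) (d : measure_display) (Om : measurableType d)
  (P : probability Om R) (q : Om -> K -> R).
Hypotheses (mq : forall k, measurable_fun setT (fun w => q w k))
  (sq : forall w, simplex (q w)).

Lemma lip_int (F : (K -> R) -> R) C : 0 <= C -> lipF F C ->
  P.-integrable setT (fun w => (F (q w))%:E).
Proof.
move=> C0 HF.
apply: (@le_integrable _ _ _ P setT measurableT _ (fun _ => (`|F (fun _ => 0)| + C)%:E)).
- by apply/measurable_EFinP; exact: lip_measurable C0 HF mq.
- move=> w _; rewrite !abse_EFin lee_fin [X in _ <= X]ger0_norm; last by rewrite addr_ge0.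
  have := HF (q w) (fun _ => 0); rewrite l1_simplex // mulr1 => h.
  have := ler_normB (F (q w)) (F (fun _ => 0)).
  have := ler_normD (F (q w) - F (fun _ => 0)) (F (fun _ => 0)).
  rewrite subrK; lra.
- exact: (finite_measure_integrable_cst P (`|F (fun _ => 0)| + C) measurableT).
Qed.

Lemma int_dot (b p0 : K -> R) : (forall k, (\int[P]_w (q w k)%:E = (p0 k)%:E)%E) ->
  (\int[P]_w (dotp (q w) b)%:E = (dotp p0 b)%:E)%E.
Proof.
move=> Eq; rewrite /dotp.
under eq_integral do rewrite -sumEFin.
rewrite integral_sum //; last first.
  move=> k; apply: (@lip_int (fun x => x k * b k) `|b k|) => // x y /=.
  rewrite -mulrBl normrM mulrC; apply: ler_wpM2l => //.
  exact: (coord_le_sumabs (fun k => x k - y k) k).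
rewrite -sumEFin; apply: eq_bigr => k _.
under eq_integral do rewrite EFinM muleC.
rewrite integralZl //; last by apply: (@lip_int (fun x => x k) 1) => //; exact: coord_lipF.
by rewrite Eq -EFinM mulrC.
Qed.

End Integ.

Unset Implicit Arguments.

Theorem theorem3p2 (R : realType) (K : finType) (T : topologicalType)
    (D : set T) (g : T -> K -> R) :
  compact D -> D !=set0 ->
  (forall k, {within D, continuous (fun x => g x k)}) ->
  let A := action_set D g in
  exists2 CA : R, 0 < CA &
  forall p0 : K -> R, simplex p0 -> (forall k, 0 < p0 k) ->
  forall eps : R, 0 < eps ->
  exists2 c : R, 0 < c &
  forall (d : measure_display) (Omega : measurableType d)
         (P : probability Omega R) (q : Omega -> K -> R),
    (forall k, measurable_fun setT (fun w => q w k)) ->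
    (forall w, simplex (q w)) ->
    (forall k, (\int[P]_w (q w k)%:E = (p0 k)%:E)%E) ->
    (CA%:E * \int[P]_w (dist_to_set (q w) (confset A p0))%:E
       >= \int[P]_w (valA A (q w))%:E - (valA A p0)%:E)%E /\
    (\int[P]_w (valA A (q w))%:E - (valA A p0)%:E
       >= c%:E * P [set w | ~ confset_eps A p0 eps (q w)])%E.
Proof.
move=> cD D0 gc A.
have [CA CA0 HCA] := upper_det cD D0 gc.
have [L [L0 HL]] := vA_lip cD D0 gc.
exists CA => // p0 sp0 p0pos eps eps0.
have [b [c c0 [bp0 bq blow]]] := lower_det cD D0 gc sp0 eps0.
exists c => // d Om P q mq sq Eq.
have ne : confset A p0 !=set0 := @conf_ne _ _ _ D g _ sp0.
have vlip : lipF (fun x => valA A x) L by move=> x y; exact: HL.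
have gap_int (b' : K -> R) : P.-integrable setT (fun w => (valA A (q w) - dotp (q w) b')%:E).
  apply: (@lip_int _ _ _ _ P q mq sq (fun x => valA A x - dotp x b') (L + \sum_k `|b' k|)).
    by apply: addr_ge0; [exact: ltW|apply: sumr_ge0].
  exact: lipF_sub vlip (dotp_lipF b').
have int_gap (b' : K -> R) : dotp p0 b' = valA A p0 ->
  (\int[P]_w (valA A (q w))%:E - (valA A p0)%:E =
   \int[P]_w (valA A (q w) - dotp (q w) b')%:E)%E.
  move=> hb.
  rewrite (eq_integral (fun w => (valA A (q w) - dotp (q w) b')%:E + (dotp (q w) b')%:E)%E);
    last by move=> w _; rewrite -EFinD subrK.
  rewrite integralD //; last first.
    apply: (@lip_int _ _ _ _ P q mq sq (fun x => dotp x b') (\sum_k `|b' k|)).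
      by apply: sumr_ge0.
    exact: dotp_lipF.
  by rewrite (int_dot mq sq b' Eq) -hb addeK.
have dist_int : P.-integrable setT (fun w => (dist_to_set (q w) (confset A p0))%:E).
  exact: (@lip_int _ _ _ _ P q mq sq (fun x => dist_to_set x (confset A p0)) 1 ler01 (dist_lipF ne)).
split.
  have [a Ha] := astar_ex cD D0 gc p0.
  rewrite (int_gap a (astar_eq cD D0 gc Ha)) -(integralZl measurableT dist_int).
  apply: (@le_integral _ _ _ P setT measurableT _ _ (gap_int a) (integrableZl measurableT CA dist_int)) => w _.
  by rewrite -EFinM lee_fin; exact: HCA.
rewrite (int_gap b bp0).
set bad := [set w | ~ confset_eps A p0 eps (q w)].
have mdist : measurable_fun setT (fun w => dist_to_set (q w) (confset A p0)).
  exact: (lip_measurable ler01 (dist_lipF ne) mq).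
have badE : bad = setT `&` (fun w => cst eps w <= dist_to_set (q w) (confset A p0)) @^-1` [set true].
  apply/seteqP; split => w /=.
    move=> nb; split => //; rewrite /preimage /=; apply/eqP; rewrite eqb_id.
    by rewrite leNgt; apply/negP => lt; apply: nb; split.
  by move=> [_ /= h] [_ lt]; move: h; rewrite leNgt lt.
have mbad : measurable bad.
  have H := measurable_fun_ler (measurable_cst eps) mdist.
  rewrite badE; apply: H => //.
have iI : P.-integrable setT (fun w => (c * \1_bad w)%:E).
  apply: (eq_integrable measurableT _ _ _ (integrableZl measurableT c (integrable_indic P mbad))).
  by move=> w _; rewrite EFinM.
apply: (@le_trans _ _ (\int[P]_w (c * \1_bad w)%:E)%E).
  under eq_integral do rewrite EFinM.
  by rewrite integralZl ?integral_indic ?setIT //; exact: integrable_indic.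
apply: (@le_integral _ _ _ P setT measurableT _ _ iI (gap_int b)) => w _.
rewrite lee_fin indicE; case: (boolP (w \in bad)) => h; rewrite ?mulr1 ?mulr0.
  apply: blow => //; move: h; rewrite inE /bad /= => nb.
  by rewrite leNgt; apply/negP => lt; apply: nb; split.
by rewrite subr_ge0.
Qed.
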